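(* For every $n\ge 4$, $W(n)\le \frac34 n+1$.
   Context: Graphs are finite simple graphs viewed as structures with adjacency relation $E$ and equality; $\chi(G)$ is the chromatic number and $K_3$ the complete graph on 3 vertices. For a graph $G$ with $\chi(G)>3$, $W(G)$ is the least $k$ such that some existential-positive first-order sentence (built from atomic formulas $x=y$, $E(x,y)$ using only $\wedge$, $\vee$ and $\exists$) in which at most $k$ distinct variables occur is true in $G$ and false in $K_3$. $W(n)=\max\{W(G): |V(G)|=n,\ \chi(G)>3\}$. *)

(* Defs.v *)
From mathcomp Require Import all_boot.
Set Implicit Arguments. Unset Strict Implicit. Unset Printing Implicit Defensive.

Definition simple_graph (T : finType) (e : rel T) : Prop :=
  (forall x y, e x y = e y x) /\ (forall x, ~~ e x x).

Definition colorable (T : finType) (e : rel T) (k : nat) : Prop :=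
  exists f : T -> 'I_k, forall x y, e x y -> f x != f y.

Definition chi_gt (T : finType) (e : rel T) (m : nat) : Prop :=
  forall k, colorable e k -> m < k.

Definition K3 : rel 'I_3 := fun x y => x != y.

(* Existential-positive first-order formulas over {E, =}; variables are nats. *)
Inductive epf : Type :=
| FEq : nat -> nat -> epf
| FE : nat -> nat -> epf
| FAnd : epf -> epf -> epf
| FOr : epf -> epf -> epf
| FEx : nat -> epf -> epf.

Fixpoint vars (f : epf) : seq nat :=
  match f with
  | FEq i j | FE i j => [:: i; j]
  | FAnd f1 f2 | FOr f1 f2 => vars f1 ++ vars f2
  | FEx i g => i :: vars g
  end.

Definition nvars (f : epf) : nat := size (undup (vars f)).

Fixpoint free_vars (f : epf) : seq nat :=
  match f with
  | FEq i j | FE i j => [:: i; j]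
  | FAnd f1 f2 | FOr f1 f2 => free_vars f1 ++ free_vars f2
  | FEx i g => filter (fun j => j != i) (free_vars g)
  end.

Definition sentence (f : epf) : Prop := free_vars f = [::].

Definition upd (T : Type) (a : nat -> T) (i : nat) (x : T) : nat -> T :=
  fun j => if j == i then x else a j.

Fixpoint eval (T : finType) (e : rel T) (a : nat -> T) (f : epf) : Prop :=
  match f with
  | FEq i j => a i = a j
  | FE i j => e (a i) (a j)
  | FAnd f1 f2 => eval e a f1 /\ eval e a f2
  | FOr f1 f2 => eval e a f1 \/ eval e a f2
  | FEx i g => exists x : T, eval e (upd a i x) g
  end.

(* truth of a sentence in a structure (the assignment is irrelevant) *)
Definition holds (T : finType) (e : rel T) (f : epf) : Prop :=
  forall a : nat -> T, eval e a f.

(* W(G) <= k : some ep-sentence with at most k distinct variables is true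
   in G and false in K3 (unfolding of "the least such k is <= k"). *)
Definition W_le (T : finType) (e : rel T) (k : nat) : Prop :=
  exists f : epf, [/\ sentence f, nvars f <= k, holds e f & ~ holds K3 f].

(* Main.v *)
Require Import Defs.
From mathcomp Require Import all_boot.
From mathcomp Require Import zify.
From Stdlib Require Import Classical ClassicalEpsilon.
Set Implicit Arguments. Unset Strict Implicit. Unset Printing Implicit Defensive.

Definition conjN (N : nat) (l : seq epf) := foldr FAnd (FEq N N) l.

Lemma eval_conj (T : finType) (e : rel T) a N (A : eqType) (F : A -> epf) s :
  eval e a (conjN N (map F s)) <-> forall y, y \in s -> eval e a (F y).
Proof.
elim: s => [|y s IH] /=; first by split.
split.
- move=> [H1 H2] z; rewrite inE => /orP [/eqP -> //|zs].
  by apply IH.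
- move=> H; split; first by apply H; rewrite inE eqxx.
  by apply/IH => z zs; apply H; rewrite inE zs orbT.
Qed.

Lemma vars_conj N (A : eqType) (F : A -> epf) s x :
  x \in vars (conjN N (map F s)) -> x = N \/ exists2 y, y \in s & x \in vars (F y).
Proof.
elim: s => [|y s IH] /=; first by rewrite !inE orbb => /eqP; left.
rewrite mem_cat => /orP [H|H]; first by right; exists y => //; rewrite inE eqxx.
case: (IH H) => [->|[z zs Hz]]; first by left.
by right; exists z => //; rewrite inE zs orbT.
Qed.

Lemma fv_vars f x : x \in free_vars f -> x \in vars f.
Proof.
elim: f => [i j|i j|f1 IH1 f2 IH2|f1 IH1 f2 IH2|i g IH] //=.
- by rewrite !mem_cat => /orP [/IH1 ->|/IH2 ->] //; rewrite orbT.
- by rewrite !mem_cat => /orP [/IH1 ->|/IH2 ->] //; rewrite orbT.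
- by rewrite mem_filter inE => /andP [_ /IH ->]; rewrite orbT.
Qed.

Lemma vars_foldr (l : seq nat) f : vars (foldr FEx f l) = l ++ vars f.
Proof. by elim: l => //= j l ->. Qed.

Lemma fv_foldr (l : seq nat) f : forall m : seq nat, (forall x, x \in free_vars f -> (x \in l) || (x \in m)) ->
  forall x, x \in free_vars (foldr FEx f l) -> x \in m.
Proof.
elim: l => [|j l IH] m H x /=; first by move/H.
rewrite mem_filter => /andP [xj xf].
have := IH (j :: m) _ x xf.
rewrite inE (negbTE xj) /=; apply => y /H.
by rewrite !inE; case: (y == j) => //=; rewrite orbT.
Qed.

Lemma exs_intro (T : finType) (e : rel T) (g : nat -> T) f (l : seq nat) : forall a,
  (forall a', (forall j, j \in l -> a' j = g j) -> (forall j, j \notin l -> a' j = a j) ->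
     eval e a' f) -> eval e a (foldr FEx f l).
Proof.
elim: l => [|j l IH] a H /=; first by apply H => // j; rewrite inE.
exists (g j); apply IH => a' H1 H2; apply H.
- move=> k; case kl: (k \in l); first by move=> _; apply H1.
  rewrite inE kl orbF => /eqP kj; subst k; rewrite H2 ?kl //.
  by rewrite /upd eqxx.
- move=> k; rewrite inE negb_or => /andP [kj kl].
  by rewrite H2 // /upd (negbTE kj).
Qed.

Lemma exs_elim (T : finType) (e : rel T) f (l : seq nat) : forall a,
  eval e a (foldr FEx f l) -> exists a', eval e a' f.
Proof.
elim: l => [|j l IH] a /=; first by exists a.
by move=> [x Hx]; apply: (IH _ Hx).
Qed.

Definition col3 n (e : rel 'I_n) (S : {set 'I_n}) :=
  exists c : 'I_n -> 'I_3, forall x y, x \in S -> y \in S -> e x y -> c x != c y.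

Lemma minimal_noncol n (e : rel 'I_n) k : forall (S : {set 'I_n}), #|S| <= k -> ~ col3 e S ->
  exists S', [/\ ~ col3 e S', #|S'| <= #|S| & forall v, v \in S' -> col3 e (S' :\ v)].
Proof.
elim: k => [|k IH] S HS nS.
- case: (classic (exists v, v \in S /\ ~ col3 e (S :\ v))) => [[v [vS _]]|H].
    by move: HS; rewrite (cardsD1 v) vS.
  exists S; split => // v vS; apply: NNPP => H2; apply: H; by exists v.
- case: (classic (exists v, v \in S /\ ~ col3 e (S :\ v))) => [[v [vS H]]|H].
    have: #|S :\ v| <= k by move: HS; rewrite (cardsD1 v) vS.
    move=> /IH /(_ H) [S' [H1 H2 H3]]; exists S'; split => //.
    by apply: (leq_trans H2); rewrite (cardsD1 v S) vS.
  exists S; split => // v vS; apply: NNPP => H2; apply: H; by exists v.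
Qed.

Lemma formula_main n (e : rel 'I_n) (S I : {set 'I_n}) (u0 : 'I_n) :
  simple_graph e -> ~ col3 e S -> I \subset S -> (forall x y, x \in I -> y \in I -> ~~ e x y) ->
  W_le e (#|S :\: I|).+1.
Proof.
move=> [esym eirr] nS IS indI.
have vn : forall u : 'I_n, (val u == n) = false by move=> u; exact: ltn_eqF (ltn_ord u).
pose X := S :\: I.
pose xs := map val (enum X).
pose edgeP := conjN n (map (fun u : 'I_n => conjN n (map (fun w : 'I_n => FE (val u) (val w)) [seq w <- enum X | e u w])) (enum X)).
pose witP := conjN n (map (fun w : 'I_n => FEx n (conjN n (map (fun u : 'I_n => FE (val u) n) [seq u <- enum X | e u w]))) (enum I)).
pose body := FAnd edgeP witP.
have Hvb : forall x, x \in vars body -> (x == n) || (x \in xs).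
{ move=> x; rewrite /= mem_cat => /orP [].
  - case/vars_conj => [->|[u uX]]; first by rewrite eqxx.
    case/vars_conj => [->|[w]]; first by rewrite eqxx.
    rewrite mem_filter => /andP [_ wX]; rewrite !inE => /orP [] /eqP ->;
      apply/orP; right; exact: map_f.
  - case/vars_conj => [->|[w wI]]; first by rewrite eqxx.
    rewrite /= inE => /orP [/eqP ->|]; first by rewrite eqxx.
    case/vars_conj => [->|[u]]; first by rewrite eqxx.
    rewrite mem_filter => /andP [_ uX]; rewrite !inE => /orP [] /eqP ->;
      [apply/orP; right; exact: map_f | by rewrite eqxx]. }
exists (foldr FEx (FEx n body) xs); split.
- rewrite /sentence.
  have H := @fv_foldr xs (FEx n body) [::].
  case E: (free_vars _) => [//|y s].
  have Hy : y \in [::].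
    apply: (H _ y); last by rewrite E inE eqxx.
    move=> x /=; rewrite mem_filter => /andP [xn xf].
    by have := Hvb x (@fv_vars body x xf); rewrite (negbTE xn) orbF.
  by rewrite in_nil in Hy.
- rewrite /nvars; apply: (@leq_trans (size (n :: xs))).
    apply: uniq_leq_size; first exact: undup_uniq.
    move=> x; rewrite mem_undup vars_foldr /= mem_cat !inE.
    by case/orP => [->|/orP [->|/Hvb]]; rewrite ?orbT.
  by rewrite /= size_map -cardE.
- move=> a; apply: (exs_intro (g := insubd u0)) => a' H1 _ /=.
  have Ha' : forall u, u \in X -> a' (val u) = u.
    by move=> u uX; rewrite H1 ?valKd // map_f // mem_enum.
  exists (a' n); split.
  + apply/eval_conj => u; rewrite mem_enum => uX; apply/eval_conj => w.
    rewrite mem_filter mem_enum => /andP [euw wX] /=.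
    by rewrite /upd !vn !Ha'.
  + apply/eval_conj => w; rewrite mem_enum => wI /=; exists w.
    apply/eval_conj => u; rewrite mem_filter mem_enum => /andP [euw uX] /=.
    by rewrite /upd !vn eqxx Ha'.
- move=> HK; have [a' /= [x [Hedge Hwit]]] := exs_elim (HK (fun _ => ord0)).
  pose b := upd a' n x.
  have He : forall u w, u \in X -> w \in X -> e u w -> b (val u) != b (val w).
    move=> u w uX wX euw; move/eval_conj: Hedge => /(_ u); rewrite mem_enum => /(_ uX).
    move/eval_conj => /(_ w); rewrite mem_filter mem_enum euw wX => /(_ isT) //.
  have Hw : forall w, exists y : 'I_3, w \in I -> forall u, u \in X -> e u w -> b (val u) != y.
    move=> w; case: (boolP (w \in I)) => wI; last by exists ord0.
    move/eval_conj: Hwit => /(_ w); rewrite mem_enum => /(_ wI) [y Hy]; exists y => _ u uX euw.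
    move/eval_conj: Hy => /(_ u); rewrite mem_filter mem_enum euw uX => /(_ isT) /=.
    by rewrite /K3 /b /upd eqxx !vn.
  pose wit w := proj1_sig (constructive_indefinite_description _ (Hw w)).
  have Hwit' : forall w, w \in I -> forall u, u \in X -> e u w -> b (val u) != wit w.
    move=> w; exact: (proj2_sig (constructive_indefinite_description _ (Hw w))).
  apply: nS; exists (fun v => if v \in X then b (val v) else wit v) => u w uS wS euw.
  case: (boolP (u \in X)) => uX; case: (boolP (w \in X)) => wX.
  + exact: He.
  + have wI : w \in I by move: wX; rewrite inE wS andbT negbK.
    exact: Hwit'.
  + have uI : u \in I by move: uX; rewrite inE uS andbT negbK.
    by rewrite eq_sym; apply: Hwit' => //; rewrite esym.
  + have wI : w \in I by move: wX; rewrite inE wS andbT negbK.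
    have uI : u \in I by move: uX; rewrite inE uS andbT negbK.
    by move: (indI u w uI wI); rewrite euw.
Qed.

Theorem corollary3 (n : nat) : 4 <= n ->
  forall e : rel 'I_n, simple_graph e -> chi_gt e 3 ->
  exists k : nat, 4 * k <= 3 * n + 4 /\ W_le e k.
Proof.
move=> n4 e sg chi.
have nT : ~ col3 e setT.
  move=> [c Hc]; suff: 3 < 3 by rewrite ltnn.
  by apply: chi; exists c => x y; apply: Hc; rewrite in_setT.
have [S [nS _ minS]] := minimal_noncol (leqnn #|[set: 'I_n]|) nT.
have [v vS] : exists v, v \in S.
  apply: NNPP => H; apply: nS; exists (fun _ => ord0) => x y xS.
  by exfalso; apply: H; exists x.
have [c Hc] := minS v vS.
pose C (i : 'I_3) := [set u in S :\ v | c u == i].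
have [i Hi] : exists i, #|S| - 1 <= 3 * #|C i|.
  pose i0 := @Ordinal 3 0 isT. pose i1 := @Ordinal 3 1 isT. pose i2 := @Ordinal 3 2 isT.
  have cover : S :\ v \subset C i0 :|: C i1 :|: C i2.
    apply/subsetP => u; rewrite !inE => ->; rewrite /=.
    by case: (c u) => [[|[|[|m]]] Hm].
  have h1 := subset_leq_card cover.
  have h2 := cardsU (C i0 :|: C i1) (C i2).
  have h3 := cardsU (C i0) (C i1).
  have h4 := cardsD1 v S; rewrite vS in h4.
  case: (leqP (#|S| - 1) (3 * #|C i0|)) => g0; first by exists i0.
  case: (leqP (#|S| - 1) (3 * #|C i1|)) => g1; first by exists i1.
  case: (leqP (#|S| - 1) (3 * #|C i2|)) => g2; first by exists i2.
  exfalso; lia.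
have cardS : #|S| <= n by rewrite -[X in _ <= X](card_ord n) max_card.
have IS : C i \subset S.
  by apply/subsetP => u; rewrite !inE => /andP [/andP [_ ->] _].
have indI : forall x y, x \in C i -> y \in C i -> ~~ e x y.
  move=> x y; rewrite !inE => /andP [/andP [xv xS] /eqP cx] /andP [/andP [yv yS] /eqP cy].
  apply/negP => exy; have := Hc x y; rewrite !inE xv xS yv yS cx cy eqxx => /(_ isT isT exy) //.
exists (#|S :\: C i|).+1; split; last exact: formula_main v sg nS IS indI.
have hc : #|S :\: C i| = #|S| - #|C i| by rewrite cardsD (setIidPr IS).
have hci : #|C i| <= #|S| by apply: subset_leq_card.
rewrite hc; lia.
Qed.
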